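(* Let $\lambda,\sigma_1,\sigma_2\in\mathbb{C}^*$ and $\eta_1,\eta_2\in\mathbb{C}$. Write $\Omega(\lambda,\eta_1,\sigma_1,0)=\mathbb{C}[X,Y]$ and $\Omega(\lambda,\eta_2,\sigma_2,0)=\mathbb{C}[X_1,Y_1]$, and let $W=\mathrm{span}\{\sum_{t=0}^{j}\binom{j}{t}X^iY^{j-t}\otimes X_1^kY_1^t\mid i,j,k\in\mathbb{N}\}$, a nonzero proper subspace of $\Omega(\lambda,\eta_1,\sigma_1,0)\otimes\Omega(\lambda,\eta_2,\sigma_2,0)$. Then $W$ is a nonzero proper $\mathcal{G}$-submodule of $\Omega(\lambda,\eta_1,\sigma_1,0)\otimes\Omega(\lambda,\eta_2,\sigma_2,0)$.
   Context: The planar Galilean conformal algebra $\mathcal{G}$ is the complex Lie algebra with basis $\{L_m,H_m,I_m,J_m\mid m\in\mathbb{Z}\}$ and brackets $[L_m,L_n]=(n-m)L_{m+n}$, $[L_m,H_n]=nH_{m+n}$, $[L_m,I_n]=(n-m)I_{m+n}$, $[L_m,J_n]=(n-m)J_{m+n}$, $[H_m,I_n]=I_{m+n}$, $[H_m,J_n]=-J_{m+n}$, and $[H_m,H_n]=[I_m,I_n]=[J_m,J_n]=[I_m,J_n]=0$ for all $m,n\in\mathbb{Z}$. For $\lambda,\sigma\in\mathbb{C}^*$, $\eta\in\mathbb{C}$, the module $\Omega(\lambda,\eta,\sigma,0)$ is a polynomial algebra in two variables $X,Y$ with $L_m f(X,Y)=\lambda^m(Y-mX+m\eta)f(X,Y-m)$,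 $H_m f(X,Y)=\lambda^m X f(X,Y-m)$, $I_m f(X,Y)=\lambda^m\sigma f(X-1,Y-m)$, $J_m f(X,Y)=0$. The tensor product has action $x(v\otimes w)=xv\otimes w+v\otimes xw$. $\mathbb{N}$ denotes non-negative integers. *)

(* Defs.v *)
From HB Require Import structures.
From mathcomp Require Import all_boot all_order all_algebra.
From mathcomp Require Import mpoly complex.
From mathcomp Require Import Rstruct.
From Stdlib Require Import Rdefinitions.
Set Implicit Arguments. Unset Strict Implicit. Unset Printing Implicit Defensive.
Import Order.TTheory GRing.Theory Num.Theory.
Local Open Scope ring_scope.

Notation CC := (complex Rdefinitions.R).

(* Basis of the planar Galilean conformal algebra G. *)
Inductive gbasis := gL of int | gH of int | gI of int | gJ of int.

(* The tensor product C[X,Y] (x) C[X1,Y1] is identified with C[X,Y,X1,Y1]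
   = {mpoly CC[4]}, with f(X,Y) (x) g(X1,Y1) |-> f(X,Y) g(X1,Y1).
   Variables: 0 = X, 1 = Y, 2 = X1, 3 = Y1. *)
Notation T4 := {mpoly CC[4]}.
Definition vX  : T4 := 'X_(@inord 3 0).
Definition vY  : T4 := 'X_(@inord 3 1).
Definition vX1 : T4 := 'X_(@inord 3 2).
Definition vY1 : T4 := 'X_(@inord 3 3).

Definition shift4 (a b c d : CC) (F : T4) : T4 :=
  F \mPo [tuple vX + a%:MP; vY + b%:MP; vX1 + c%:MP; vY1 + d%:MP].

(* Action of G on Omega(lam,eta1,sig1,0) (x) Omega(lam,eta2,sig2,0):
   x(v (x) w) = xv (x) w + v (x) xw, where on Omega(lam,eta,sig,0)
   L_m f = lam^m (Y - mX + m eta) f(X,Y-m), H_m f = lam^m X f(X,Y-m),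
   I_m f = lam^m sig f(X-1,Y-m), J_m f = 0. *)
Definition tens_act (lam eta1 sig1 eta2 sig2 : CC) (x : gbasis) (F : T4) : T4 :=
  match x with
  | gL m => (lam ^ m) *: ((vY - m%:~R *: vX + (m%:~R * eta1)%:MP) * shift4 0 (- m%:~R) 0 0 F
                        + (vY1 - m%:~R *: vX1 + (m%:~R * eta2)%:MP) * shift4 0 0 0 (- m%:~R) F)
  | gH m => (lam ^ m) *: (vX * shift4 0 (- m%:~R) 0 0 F + vX1 * shift4 0 0 0 (- m%:~R) F)
  | gI m => (lam ^ m) *: (sig1 *: shift4 (-1) (- m%:~R) 0 0 F
                        + sig2 *: shift4 0 0 (-1) (- m%:~R) F)
  | gJ m => 0
  end.

Definition wgen (i j k : nat) : T4 :=
  \sum_(t < j.+1) 'C(j, t)%:R *: (vX ^+ i * vY ^+ (j - t) * (vX1 ^+ k * vY1 ^+ t)).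

Definition inW (F : T4) : Prop :=
  exists s : seq (CC * (nat * nat * nat)),
    F = \sum_(p <- s) p.1 *: wgen p.2.1.1 p.2.1.2 p.2.2.

Definition is_submodule (act : gbasis -> T4 -> T4) (P : T4 -> Prop) : Prop :=
  [/\ P 0,
      (forall F G, P F -> P G -> P (F + G)),
      (forall (c : CC) F, P F -> P (c *: F)) &
      (forall x F, P F -> P (act x F))].

(* Main.v *)
Require Import Defs.
From HB Require Import structures.
From mathcomp Require Import all_boot all_order all_algebra.
From mathcomp Require Import mpoly complex Rstruct.
From mathcomp Require Import ring.
Import GRing.Theory.
Local Open Scope ring_scope.

Lemma wgenE i j k : wgen i j k = vX ^+ i * vX1 ^+ k * (vY + vY1) ^+ j.
Proof.
rewrite /wgen exprDn mulr_sumr; apply: eq_bigr => t _.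
by rewrite scaler_nat mulrnAr mulrACA.
Qed.

Lemma inW0 : inW 0.
Proof. by exists [::]; rewrite big_nil. Qed.

Lemma inWD F G : inW F -> inW G -> inW (F + G).
Proof. by move=> [s ->] [s' ->]; exists (s ++ s'); rewrite big_cat. Qed.

Lemma inWZ c F : inW F -> inW (c *: F).
Proof.
move=> [s ->]; exists [seq (c * p.1, p.2) | p <- s].
rewrite big_map scaler_sumr; apply: eq_bigr => p _ /=; by rewrite scalerA.
Qed.

Lemma inWN F : inW F -> inW (- F).
Proof. by move=> h; rewrite -scaleN1r; apply: inWZ. Qed.

Lemma inWB F G : inW F -> inW G -> inW (F - G).
Proof. by move=> h1 h2; apply: inWD => //; apply: inWN. Qed.

Lemma inWg i j k : inW (wgen i j k).
Proof. by exists [:: (1, (i, j, k))]; rewrite big_seq1 scale1r. Qed.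

Lemma inW_lin (f : T4 -> T4) :
  (forall F G, f (F + G) = f F + f G) -> (forall c F, f (c *: F) = c *: f F) ->
  (forall i j k, inW (f (wgen i j k))) -> forall F, inW F -> inW (f F).
Proof.
move=> fD fZ fg F [s ->]; elim: s => [|p s IH].
  by rewrite big_nil -(scale0r (0 : T4)) fZ scale0r; exact: inW0.
by rewrite big_cons fD fZ; apply: inWD => //; apply: inWZ.
Qed.

Lemma eq_lin (f g : T4 -> T4) :
  (forall F G, f (F + G) = f F + f G) -> (forall c F, f (c *: F) = c *: f F) ->
  (forall F G, g (F + G) = g F + g G) -> (forall c F, g (c *: F) = c *: g F) ->
  (forall i j k, f (wgen i j k) = g (wgen i j k)) -> forall F, inW F -> f F = g F.
Proof.
move=> fD fZ gD gZ fg F [s ->]; elim: s => [|p s IH].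
  by rewrite big_nil -(scale0r (0 : T4)) fZ gZ !scale0r.
by rewrite big_cons fD gD fZ gZ IH fg.
Qed.

Lemma inWM F G : inW F -> inW G -> inW (F * G).
Proof.
move=> hF hG.
have h1 i j k : inW (wgen i j k * G).
  apply: (@inW_lin (fun G => wgen i j k * G)) hG.
  - by move=> ??; rewrite mulrDr.
  - by move=> ??; rewrite scalerAr.
  move=> i' j' k'; have -> : wgen i j k * wgen i' j' k' = wgen (i + i') (j + j') (k + k').
    by rewrite !wgenE !exprD; ring.
  exact: inWg.
apply: (@inW_lin (fun F => F * G)) hF.
- by move=> ??; rewrite mulrDl.
- by move=> ??; rewrite scalerAl.
exact: h1.
Qed.

Lemma inW1 : inW 1.
Proof. by have := inWg 0 0 0; rewrite wgenE !expr0 !mulr1. Qed.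

Lemma inWC c : inW c%:MP.
Proof. by rewrite -alg_mpolyC; apply: inWZ; exact: inW1. Qed.

Lemma inWX : inW vX.
Proof. by have := inWg 1 0 0; rewrite wgenE !expr0 expr1 !mulr1. Qed.
Lemma inWX1 : inW vX1.
Proof. by have := inWg 0 0 1; rewrite wgenE !expr0 expr1 mulr1 mul1r. Qed.
Lemma inWS : inW (vY + vY1).
Proof. by have := inWg 0 1 0; rewrite wgenE !expr0 expr1 !mul1r. Qed.

Lemma inWXn F n : inW F -> inW (F ^+ n).
Proof.
move=> h; elim: n => [|n IH]; first by rewrite expr0; exact: inW1.
by rewrite exprS; apply: inWM.
Qed.

Section S.
Variables a b c d : CC.
Lemma shift4D F G : shift4 a b c d (F + G) = shift4 a b c d F + shift4 a b c d G.
Proof. exact: comp_mpolyD. Qed.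
Lemma shift4Z e F : shift4 a b c d (e *: F) = e *: shift4 a b c d F.
Proof. exact: comp_mpolyZ. Qed.
Lemma shift4g i j k : shift4 a b c d (wgen i j k) =
  (vX + a%:MP) ^+ i * (vX1 + c%:MP) ^+ k * (vY + b%:MP + (vY1 + d%:MP)) ^+ j.
Proof.
rewrite wgenE /shift4 !rmorphM !rmorphXn rmorphD /=.
by rewrite /vX /vY /vX1 /vY1 !comp_mpolyXU !inordK.
Qed.
Lemma inW_shift F : inW F -> inW (shift4 a b c d F).
Proof.
apply: inW_lin; [exact: shift4D | exact: shift4Z|] => i j k.
rewrite shift4g; apply: inWM; [apply: inWM|]; apply: inWXn.
- by apply: inWD; [exact: inWX | exact: inWC].
- by apply: inWD; [exact: inWX1 | exact: inWC].
have -> : vY + b%:MP + (vY1 + d%:MP) = (vY + vY1) + (b%:MP + d%:MP) by ring.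
by apply: inWD; [exact: inWS | apply: inWD; exact: inWC].
Qed.
End S.

Lemma shift_eq m F : inW F -> shift4 0 m 0 0 F = shift4 0 0 0 m F.
Proof.
apply: eq_lin; try (by move=> *; rewrite shift4D); try (by move=> *; rewrite shift4Z).
by move=> i j k; rewrite !shift4g; congr (_ * _ ^+ _); ring.
Qed.

Definition v1 : 'I_4 -> CC := fun i => if nat_of_ord i == 1%N then 1 else 0.
Definition v2 : 'I_4 -> CC := fun i => if nat_of_ord i == 3%N then 1 else 0.
Definition psi (F : T4) : CC := F.@[v1] - F.@[v2].

Lemma psiW F : inW F -> psi F = 0.
Proof.
move=> [s ->]; elim: s => [|p s IH]; first by rewrite big_nil /psi !meval0 subrr.
move: IH; rewrite big_cons /psi !mevalD !mevalZ => /eqP; rewrite subr_eq0 => /eqP ->.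
rewrite wgenE !rmorphM /= !rmorphXn /= !mevalD /vX /vY /vX1 /vY1 !mevalXU /v1 /v2 !inordK //=.
by rewrite addr0 add0r subrr.
Qed.

Lemma notW : ~ inW vY.
Proof.
move=> /psiW; rewrite /psi /vY !mevalXU /v1 /v2 !inordK //= subr0 => /eqP.
by rewrite oner_eq0.
Qed.

Theorem proposition4p4 (lam sig1 sig2 eta1 eta2 : CC) :
  lam != 0 -> sig1 != 0 -> sig2 != 0 ->
  is_submodule (tens_act lam eta1 sig1 eta2 sig2) inW /\
  (exists F, inW F /\ F != 0) /\ (exists F, ~ inW F).
Proof.
move=> _ _ _; split; last split.
- split; [exact: inW0 | exact: inWD | exact: inWZ |].
  case=> m F hF /=; last exact: inW0.
  + rewrite shift_eq // -mulrDl; apply: inWZ; apply: inWM; last exact: inW_shift.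
    set C1 := (_ * eta1)%:MP; set C2 := (_ * eta2)%:MP.
    have -> : vY - m%:~R *: vX + C1 + (vY1 - m%:~R *: vX1 + C2) =
      (vY + vY1) - m%:~R *: vX - m%:~R *: vX1 + (C1 + C2) by ring.
    apply: inWD; last by apply: inWD; exact: inWC.
    apply: inWB; last by apply: inWZ; exact: inWX1.
    by apply: inWB; [exact: inWS | apply: inWZ; exact: inWX].
  + apply: inWZ; apply: inWD; apply: inWM; try exact: inW_shift.
    exact: inWX. exact: inWX1.
  + by apply: inWZ; apply: inWD; apply: inWZ; exact: inW_shift.
- exists 1; split; first exact: inW1. exact: oner_neq0.
- by exists vY; exact: notW.
Qed.
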